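(* Let $p$ be a state and let $r\in p^{TP}=\{Tp:T\in TP(d)\}$. Then $r$ lies on the boundary of $p^{TP}$, regarded as a subset of the affine hyperplane $\{x\in\mathbb{R}^d:\sum_i x_i=1\}$, if and only if at least one elbow of $\beta(r)$ lies on $\beta(p)$.
   Context: Fix $d\ge 2$, $\beta\in(0,\infty)$ and pairwise distinct reals $E_0=0,E_1,\dots,E_{d-1}$. Put $q_{m,n}=e^{-\beta(E_m-E_n)}$, $Z=\sum_j q_{j,0}$, $g_i=q_{i,0}/Z$. A state is a probability vector in $\mathbb{R}^d$. $TP(d)$ is the set of $d\times d$ real matrices with non-negative entries, columns summing to $1$, and $Tg=g$. For a state $p$ choose a permutation $\pi$ of $\{0,\dots,d-1\}$ with $p_{\pi(0)}/g_{\pi(0)}\ge\dots\ge p_{\pi(d-1)}/g_{\pi(d-1)}$; let $x_k=\sum_{i\le k}g_{\pi(i)}$, $y_k=\sum_{i\le k}p_{\pi(i)}$. The thermomajorization curve $\beta(p)$ is the graph of the concave piecewise-linear function on $[0,1]$ through $(0,0),(x_0,y_0),\dots,(x_{d-1},y_{d-1})=(1,1)$. The elbows of $\beta(p)$ are the points $(x_k,y_k)$ for $k=0,\dots,d-2$. A point $(x,y)$ lies on $\beta(p)$ if $y$ equals the value of that function at $x$. *)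

(* Defs.v *)
From HB Require Import structures.
From mathcomp Require Import all_boot all_order all_algebra all_fingroup.
From mathcomp Require Import reals sequences exp.
Set Implicit Arguments. Unset Strict Implicit. Unset Printing Implicit Defensive.
Import Order.TTheory GRing.Theory Num.Theory.
Local Open Scope ring_scope.

Section Thermo.
Variables (R : realType) (d : nat).

Definition qfac (beta : R) (E : 'I_d -> R) (m n : 'I_d) : R :=
  expR (- beta * (E m - E n)).

(* Gibbs state g_i = q_{i,0} / Z, Z = sum_j q_{j,0}; the index 0 is i0. *)
Definition gibbs (beta : R) (E : 'I_d -> R) (i0 : 'I_d) : 'cV[R]_d :=
  \col_i (qfac beta E i i0 / \sum_(j < d) qfac beta E j i0).

Definition is_state (p : 'cV[R]_d) : Prop :=
  (forall i, 0 <= p i ord0) /\ \sum_(i < d) p i ord0 = 1.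

Definition is_TP (g : 'cV[R]_d) (T : 'M[R]_d) : Prop :=
  [/\ forall i j, 0 <= T i j, forall j, \sum_(i < d) T i j = 1 & T *m g = g].

Definition thermal_orbit (g p : 'cV[R]_d) : 'cV[R]_d -> Prop :=
  fun r => exists T, is_TP g T /\ r = T *m p.

(* boundary of S relative to the affine hyperplane H = {x | sum_i x_i = 1}
   (subspace topology; coordinatewise (sup) distance) *)
Definition in_hyperplane (x : 'cV[R]_d) : Prop := \sum_(i < d) x i ord0 = 1.

Definition rel_boundary (S : 'cV[R]_d -> Prop) (r : 'cV[R]_d) : Prop :=
  in_hyperplane r /\
  (forall eps : R, 0 < eps -> exists x, [/\ in_hyperplane x,
      (forall i, `|x i ord0 - r i ord0| < eps) & S x]) /\
  (forall eps : R, 0 < eps -> exists x, [/\ in_hyperplane x,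
      (forall i, `|x i ord0 - r i ord0| < eps) & ~ S x]).

Definition admissible (g p : 'cV[R]_d) (s : 'S_d) : Prop :=
  forall i j : 'I_d, (i <= j)%N -> p (s j) ord0 / g (s j) ord0 <= p (s i) ord0 / g (s i) ord0.

Definition xk (g : 'cV[R]_d) (s : 'S_d) (k : nat) : R :=
  \sum_(i < d | (i <= k)%N) g (s i) ord0.
Definition yk (p : 'cV[R]_d) (s : 'S_d) (k : nat) : R :=
  \sum_(i < d | (i <= k)%N) p (s i) ord0.
(* the previous vertex (x_{k-1}, y_{k-1}), with (x_{-1},y_{-1}) = (0,0) *)
Definition xprev (g : 'cV[R]_d) (s : 'S_d) (k : nat) : R :=
  \sum_(i < d | (i < k)%N) g (s i) ord0.
Definition yprev (p : 'cV[R]_d) (s : 'S_d) (k : nat) : R :=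
  \sum_(i < d | (i < k)%N) p (s i) ord0.

Definition is_elbow (g r : 'cV[R]_d) (pt : R * R) : Prop :=
  exists s : 'S_d, admissible g r s /\
    exists k : 'I_d, (k.+1 < d)%N /\ pt = (xk g s k, yk r s k).

(* (x,y) lies on beta(p): y is the value at x of the piecewise-linear
   function through (0,0),(x_0,y_0),...,(x_{d-1},y_{d-1}) *)
Definition on_curve (g p : 'cV[R]_d) (pt : R * R) : Prop :=
  exists s : 'S_d, admissible g p s /\
    exists k : 'I_d,
      [/\ xprev g s k <= pt.1, pt.1 <= xk g s k &
          pt.2 = yprev p s k + (pt.1 - xprev g s k) * (p (s k) ord0 / g (s k) ord0)].

End Thermo.

(* Main.v *)
Require Import Defs.
From HB Require Import structures.
From mathcomp Require Import all_boot all_order all_algebra all_fingroup.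
From mathcomp Require Import reals sequences exp.
From mathcomp Require Import zify ring lra.
From Stdlib Require Import Classical_Prop.
Import Order.TTheory GRing.Theory Num.Theory.
Local Open Scope ring_scope.

Section SCL.
Variables (R : realType) (n : nat) (w : 'I_n -> R) (pos : 'I_n -> nat) (x : 'I_n -> R).
Hypothesis wpos : forall i, 0 < w i.

Definition inB a b i := (a <= pos i < b)%N.
Definition bsum (f : 'I_n -> R) a b := \sum_(i | inB a b i) f i.
Definition psum (f : 'I_n -> R) a b k := \sum_(i | inB a b i && (pos i <= k)%N) f i.

Definition bstoch a b (S : 'M[R]_n) (v y : 'I_n -> R) :=
  [/\ forall i j, 0 <= S i j,
      forall i j, ~~ (inB a b i && inB a b j) -> S i j = 0,
      forall j, inB a b j -> \sum_i S i j = 1,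
      forall i, inB a b i -> \sum_j S i j * w j = w i &
      forall i, inB a b i -> \sum_j S i j * v j = y i].

Lemma bstoch_ext a b S v y y' : (forall i, inB a b i -> y i = y' i) ->
  bstoch a b S v y' -> bstoch a b S v y.
Proof.
move=> e [h0 h1 h2 h3 h4]; split => // i hi; rewrite e //; exact: h4.
Qed.

Lemma bstoch_mul a b S1 S2 v v' y :
  bstoch a b S1 v' y -> bstoch a b S2 v v' -> bstoch a b (S1 *m S2) v y.
Proof.
case=> [h10 h1s h1c h1w h1v] [h20 h2s h2c h2w h2v]; split.
- move=> i j; rewrite mxE; apply: sumr_ge0 => l _; exact: mulr_ge0.
- move=> i j /negP hij; rewrite mxE; apply: big1 => l _.
  case: (boolP (inB a b i)) => hi; last by rewrite h1s ?mul0r // (negbTE hi).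
  case: (boolP (inB a b j)) => hj; last by rewrite (h2s l j) ?mulr0 // (negbTE hj) andbF.
  by exfalso; apply: hij; rewrite hi hj.
- move=> j hj. under eq_bigr do rewrite mxE. rewrite exchange_big /=.
  rewrite -(h2c j hj); apply: eq_bigr => l _.
  rewrite -big_distrl /=.
  case: (boolP (inB a b l)) => hl; first by rewrite h1c // mul1r.
  by rewrite (h2s l j) ?mulr0 // (negbTE hl).
- move=> i hi. rewrite -(h1w i hi). under eq_bigr do rewrite mxE big_distrl /=.
  rewrite exchange_big /=; apply: eq_bigr => l _.
  case: (boolP (inB a b l)) => hl.
  + rewrite -(h2w l hl) big_distrr /=; apply: eq_bigr => j _; by rewrite mulrA.
  + rewrite (h1s i l); last by rewrite (negbTE hl) andbF.
    rewrite mul0r; apply: big1 => j _; by rewrite !mul0r.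
- move=> i hi. rewrite -(h1v i hi). under eq_bigr do rewrite mxE big_distrl /=.
  rewrite exchange_big /=; apply: eq_bigr => l _.
  case: (boolP (inB a b l)) => hl.
  + rewrite -(h2v l hl) big_distrr /=; apply: eq_bigr => j _; by rewrite mulrA.
  + rewrite (h1s i l); last by rewrite (negbTE hl) andbF.
    rewrite mul0r; apply: big1 => j _; by rewrite !mul0r.
Qed.

Lemma bstoch_add a m b S1 S2 v y : (a <= m <= b)%N ->
  bstoch a m S1 v y -> bstoch m b S2 v y -> bstoch a b (S1 + S2) v y.
Proof.
move=> hm [h10 h1s h1c h1w h1v] [h20 h2s h2c h2w h2v].
have hB : forall i, inB a b i = inB a m i || inB m b i by move=> i; rewrite /inB; lia.
have hD1 : forall i, inB a m i -> ~~ inB m b i by move=> i; rewrite /inB; lia.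
have hD2 : forall i, inB m b i -> ~~ inB a m i by move=> i; rewrite /inB; lia.
split.
- move=> i j; rewrite mxE; exact: addr_ge0.
- move=> i j hij; rewrite mxE h1s ?h2s ?addr0 //.
  + apply: contra hij => /andP[h1 h2]; by rewrite !hB h1 h2 !orbT.
  + apply: contra hij => /andP[h1 h2]; by rewrite !hB h1 h2.
- move=> j; rewrite hB => /orP[] hj.
  + under eq_bigr do rewrite mxE. rewrite big_split /= h1c // big1 ?addr0 //.
    move=> i _; apply: h2s; by rewrite (negbTE (hD1 _ hj)) andbF.
  + under eq_bigr do rewrite mxE. rewrite big_split /= h2c // big1 ?add0r //.
    move=> i _; apply: h1s; by rewrite (negbTE (hD2 _ hj)) andbF.
- move=> i; rewrite hB => /orP[] hi.
  + under eq_bigr do rewrite mxE mulrDl. rewrite big_split /= h1w // big1 ?addr0 //.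
    move=> j _; rewrite h2s ?mul0r //; by rewrite (negbTE (hD1 _ hi)).
  + under eq_bigr do rewrite mxE mulrDl. rewrite big_split /= h2w // big1 ?add0r //.
    move=> j _; rewrite h1s ?mul0r //; by rewrite (negbTE (hD2 _ hi)).
- move=> i; rewrite hB => /orP[] hi.
  + under eq_bigr do rewrite mxE mulrDl. rewrite big_split /= h1v // big1 ?addr0 //.
    move=> j _; rewrite h2s ?mul0r //; by rewrite (negbTE (hD1 _ hi)).
  + under eq_bigr do rewrite mxE mulrDl. rewrite big_split /= h2v // big1 ?add0r //.
    move=> j _; rewrite h1s ?mul0r //; by rewrite (negbTE (hD2 _ hi)).
Qed.

Lemma bsum_ge0 a b : 0 <= bsum w a b.
Proof. apply: sumr_ge0 => i _; exact: ltW. Qed.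

Lemma bsum_gt0 {a b i} : inB a b i -> 0 < bsum w a b.
Proof.
move=> hi; rewrite /bsum (bigD1 i) //=; apply: ltr_pwDl; first exact: wpos.
apply: sumr_ge0 => j _; exact: ltW.
Qed.

Lemma sum_delta {a b i} (f : 'I_n -> R) : inB a b i ->
  \sum_(j | inB a b j) (i == j)%:R * f j = f i.
Proof.
move=> hi; rewrite (bigD1 i) //= eqxx mul1r big1 ?addr0 // => j /andP[_ hj].
by rewrite eq_sym (negbTE hj) mul0r.
Qed.

Definition Avg a b (t : R) : 'M[R]_n := \matrix_(i, j)
  if inB a b i && inB a b j then (1 - t) * (i == j)%:R + t * (w i / bsum w a b) else 0.

Lemma Avg_row a b t i (f : 'I_n -> R) : inB a b i ->
  \sum_j Avg a b t i j * f j =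
  \sum_(j | inB a b j) (((1 - t) * (i == j)%:R) * f j + t * (w i / bsum w a b) * f j).
Proof.
move=> hi; rewrite (bigID (inB a b)) /= [X in _ + X]big1 ?addr0.
  by apply: eq_bigr => j hj; rewrite mxE hi hj /= mulrDl.
by move=> j hj; rewrite mxE (negbTE hj) andbF mul0r.
Qed.

Lemma Avg_stoch a b t v : 0 <= t <= 1 -> bstoch a b (Avg a b t) v
  (fun i => (1 - t) * v i + t * (w i * bsum v a b / bsum w a b)).
Proof.
move=> /andP[t0 t1]; split.
- move=> i j; rewrite mxE; case: ifP => // _; apply: addr_ge0.
  + apply: mulr_ge0; [lra | by case: (i == j)].
  + apply: mulr_ge0 => //; apply: divr_ge0; [exact: ltW | exact: bsum_ge0].
- by move=> i j hij; rewrite mxE (negbTE hij).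
- move=> j hj; have W0 := bsum_gt0 hj.
  under eq_bigr do rewrite mxE hj andbT.
  rewrite -big_mkcond /= big_split /=.
  under eq_bigr do rewrite eq_sym.
  rewrite -big_distrr /=.
  have -> : \sum_(i | inB a b i) (j == i)%:R = 1 :> R.
    have := sum_delta (fun _ => 1) hj; under eq_bigr do rewrite mulr1; by [].
  rewrite -big_distrr /= -mulr_suml.
  rewrite -/(bsum w a b) divff ?mulr1 ?mulr1; [lra | exact: lt0r_neq0].
- move=> i hi; have W0 := bsum_gt0 hi.
  rewrite Avg_row // big_split /=.
  under eq_bigr do rewrite -mulrA.
  rewrite -big_distrr /= sum_delta //.
  under eq_bigr do rewrite -mulrA.
  rewrite -big_distrr /= -big_distrr /= -/(bsum w a b).
  rewrite divfK; [lra | exact: lt0r_neq0].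
- move=> i hi; have W0 := bsum_gt0 hi.
  rewrite Avg_row // big_split /=.
  under eq_bigr do rewrite -mulrA.
  rewrite -big_distrr /= sum_delta //.
  under eq_bigr do rewrite -mulrA.
  rewrite -big_distrr /= -big_distrr /= -/(bsum v a b).
  by rewrite mulrAC.
Qed.


Lemma psum_lo f a b k : (k < a)%N -> psum f a b k = 0.
Proof. move=> hk; apply: big_pred0 => i; rewrite /inB; lia. Qed.

Lemma psum_hi f a b k : (b <= k.+1)%N -> psum f a b k = bsum f a b.
Proof. move=> hk; apply: eq_bigl => i; rewrite /inB; lia. Qed.

Lemma psum_left f a b ks k : (ks.+1 <= b)%N ->
  psum f a ks.+1 k = psum f a b (minn k ks).
Proof. move=> hk; apply: eq_bigl => i; rewrite /inB; lia. Qed.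

Lemma bsum_left f a b ks : (ks.+1 <= b)%N -> bsum f a ks.+1 = psum f a b ks.
Proof. move=> hk; apply: eq_bigl => i; rewrite /inB; lia. Qed.

Lemma psum_split f a m b k : (a <= m <= b)%N ->
  psum f a b k = psum f a m k + psum f m b k.
Proof.
move=> hm; rewrite /psum (bigID (fun i => pos i < m)%N) /=; congr (_ + _);
  apply: eq_bigl => i; rewrite /inB; lia.
Qed.

Lemma bsum_split f a m b : (a <= m <= b)%N ->
  bsum f a b = bsum f a m + bsum f m b.
Proof.
move=> hm; rewrite /bsum (bigID (fun i => pos i < m)%N) /=; congr (_ + _);
  apply: eq_bigl => i; rewrite /inB; lia.
Qed.

Lemma psum_lin (c1 c2 : R) f g a b k :
  psum (fun i => c1 * f i + c2 * g i) a b k = c1 * psum f a b k + c2 * psum g a b k.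
Proof. by rewrite /psum big_split /= -!big_distrr. Qed.

Lemma bsum_lin (c1 c2 : R) f g a b :
  bsum (fun i => c1 * f i + c2 * g i) a b = c1 * bsum f a b + c2 * bsum g a b.
Proof. by rewrite /bsum big_split /= -!big_distrr. Qed.

Definition decB a b := forall i j, inB a b i -> inB a b j -> (pos i <= pos j)%N ->
  x j / w j <= x i / w i.

Lemma conc a b k : decB a b ->
  psum w a b k * bsum x a b <= psum x a b k * bsum w a b.
Proof.
move=> hdec.
rewrite /bsum (bigID (fun i => pos i <= k)%N) /=.
rewrite [X in _ <= _ * X](bigID (fun i => pos i <= k)%N) /=.
rewrite -/(psum w a b k) -/(psum x a b k) !mulrDr.
rewrite [psum x a b k * psum w a b k]mulrC lerD2l.
rewrite !big_distrlr /=; apply: ler_sum => i /andP[hi hik]; apply: ler_sum => j /andP[hj hjk].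
have hw := wpos i; have hw' := wpos j.
have := hdec i j hi hj; rewrite leq_eqVlt. move=> hd.
have {}hd : x j / w j <= x i / w i by apply: hd; apply/orP; right; lia.
have e1 : w i * x j = w i * w j * (x j / w j) by field; exact: lt0r_neq0.
have e2 : x i * w j = w i * w j * (x i / w i) by field; exact: lt0r_neq0.
rewrite e1 e2; apply: ler_wpM2l => //.
by apply: mulr_ge0; exact: ltW.
Qed.

Lemma bstoch_empty a b v y : (forall i, ~~ inB a b i) -> bstoch a b 0 v y.
Proof.
move=> he; split.
- by move=> i j; rewrite mxE.
- by move=> i j _; rewrite mxE.
- by move=> j hj; move: (he j); rewrite hj.
- by move=> j hj; move: (he j); rewrite hj.
- by move=> j hj; move: (he j); rewrite hj.
Qed.

Lemma small_case a b v : (b <= a.+1)%N -> decB a b -> bsum x a b = bsum v a b ->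
  exists S, bstoch a b S v x.
Proof.
move=> hab hdec htot; exists (Avg a b 1).
have h01 : 0 <= (1 : R) <= 1 by rewrite ler01 lexx.
refine (@bstoch_ext a b _ v x _ _ (Avg_stoch a b 1 v h01)).
move=> i hi /=; have W0 := bsum_gt0 hi.
rewrite subrr mul0r add0r mul1r -htot.
have e : x i * bsum w a b = w i * bsum x a b.
  rewrite /bsum !big_distrr /=; apply: eq_bigr => j hj.
  have h1 := hdec i j hi hj; have h2 := hdec j i hj hi.
  have {h1 h2} he : x j / w j = x i / w i.
    by apply/le_anti; rewrite h1 ?h2 //; move: hi hj; rewrite /inB; lia.
  have hw := wpos i; have hw' := wpos j.
  have -> : x j = w j * (x i / w i) by rewrite -he; field; exact: lt0r_neq0.
  by field; exact: lt0r_neq0.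
by rewrite -e; field; exact: lt0r_neq0.
Qed.

Lemma SCL_main N : forall a b v, (b - a <= N)%N -> decB a b ->
  (forall k, psum x a b k <= psum v a b k) -> bsum x a b = bsum v a b ->
  exists S, bstoch a b S v x.
Proof.
elim: N => [|N IH] a b v hN hdec hdom htot.
  by apply: small_case => //; lia.
case: (leqP b a.+1) => hab; first exact: small_case.
case: (boolP [exists i, inB a b i]) => [/existsP[i0 hi0]|hne]; last first.
  exists 0; apply: bstoch_empty => i; apply: contra hne => hi; apply/existsP; by exists i.
have W0 := bsum_gt0 hi0.
have Wn0 : bsum w a b != 0 by exact: lt0r_neq0.
set W := bsum w a b; set M := bsum v a b.
pose c k := psum v a b k - psum w a b k * M / W.
pose D k := psum v a b k - psum x a b k.
have hD0 : forall k, 0 <= D k by move=> k; rewrite /D subr_ge0.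
have hDc : forall k, D k <= c k.
  move=> k; rewrite /D /c lerD2l lerN2 ler_pdivrMr // /M -htot; exact: conc.
have hlo : forall k, (k < a)%N -> c k = 0 /\ D k = 0.
  by move=> k hk; rewrite /c /D !psum_lo // mul0r mul0r !subrr.
have hhi : forall k, (b <= k.+1)%N -> c k = 0 /\ D k = 0.
  move=> k hk; rewrite /c /D !psum_hi // -/W -/M htot -/M; split; last by rewrite subrr.
  by rewrite mulrAC divff // mul1r subrr.
have [t [ks [/andP[ht0 ht1] hks1 hks2 hall heq]]] : exists t ks, [/\ 0 <= t <= 1,
    (a <= ks)%N, (ks.+1 < b)%N, (forall k, t * c k <= D k) & t * c ks = D ks].
  case: (boolP [exists k : 'I_b, [&& (a <= k)%N, (k.+1 < b)%N & c k == 0]]).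
  - case/existsP => k /and3P[hk1 hk2 /eqP hk3]; exists 0, k; split => //.
    + by rewrite lexx ler01.
    + by move=> k'; rewrite mul0r.
    + by rewrite mul0r; apply/eqP; rewrite eq_le hD0 -hk3 hDc.
  - move=> hnone.
    have hcpos : forall k : nat, (a <= k)%N -> (k.+1 < b)%N -> 0 < c k.
      move=> k hk1 hk2; have hkb : (k < b)%N by lia.
      have : c k != 0.
        apply: contra hnone => hck; apply/existsP; exists (Ordinal hkb).
        by rewrite /= hk1 hk2 hck.
      by rewrite lt_def => ->; rewrite (le_trans (hD0 k) (hDc k)).
    have hab' : (a < b)%N by lia.
    pose P := fun k : 'I_b => (a <= k)%N && (k.+1 < b)%N.
    have P0 : P (Ordinal hab') by rewrite /P /= leqnn.
    case: (arg_minP (fun k : 'I_b => D k / c k) P0) => ks /andP[hks1 hks2] hmin.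
    have cks := hcpos _ hks1 hks2.
    exists (D ks / c ks), ks; split => //.
    + apply/andP; split; first by apply: divr_ge0 => //; exact: ltW.
      by rewrite ler_pdivrMr // mul1r.
    + move=> k; case: (ltnP k a) => hk1.
        by case: (hlo k hk1) => -> ->; rewrite mulr0.
      case: (leqP b k.+1) => hk2.
        by case: (hhi k hk2) => -> ->; rewrite mulr0.
      have hkb : (k < b)%N by lia.
      have := hmin (Ordinal hkb); rewrite /P /= hk1 hk2 => /(_ isT).
      by rewrite ler_pdivlMr ?(hcpos _ hk1 hk2) // mulrC.
    + by rewrite divfK //; exact: lt0r_neq0.
pose v' := fun i => (1 - t) * v i + t * (w i * M / W).
have hv'p : forall k, psum v' a b k = psum v a b k - t * c k.
  move=> k; rewrite /v' /c /psum big_split /= -!big_distrr /= -!mulr_suml.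
  by ring.
have hv'b : bsum v' a b = M.
  rewrite /v' /bsum big_split /= -!big_distrr /= -!mulr_suml.
  have -> : \sum_(i | inB a b i) w i = W by [].
  have -> : \sum_(i | inB a b i) v i = M by [].
  by field.
have hsub1 : forall i, inB a ks.+1 i -> inB a b i by move=> i; rewrite /inB; lia.
have hsub2 : forall i, inB ks.+1 b i -> inB a b i by move=> i; rewrite /inB; lia.
have hks2' : (ks.+1 <= b)%N by lia.
have [S1 hS1] : exists S, bstoch a ks.+1 S v' x.
  apply: (IH a ks.+1 v'); first by lia.
  - by move=> i j hi hj; apply: hdec; [apply: hsub1 | apply: hsub1].
  - move=> k; rewrite !(psum_left _ _ _ _ _ hks2') hv'p.
    by have := hall (minn k ks); rewrite /D; lra.
  - by rewrite !(bsum_left _ _ _ _ hks2') hv'p; move: heq; rewrite /D; lra.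
have [S2 hS2] : exists S, bstoch ks.+1 b S v' x.
  apply: (IH ks.+1 b v'); first by lia.
  - by move=> i j hi hj; apply: hdec; [apply: hsub2 | apply: hsub2].
  - have hm : (a <= ks.+1 <= b)%N by lia.
    move=> k; have e1 := psum_split x _ _ _ k hm; have e2 := psum_split v' _ _ _ k hm.
    rewrite !(psum_left _ _ _ _ _ hks2') in e1 e2.
    have h1 := hall k; have h2 := hv'p k.
    have h3 := hv'p (minn k ks).
    case: (leqP k ks) => hk.
      move: e1 e2 h3; have -> : minn k ks = k by lia.
      move=> e1 e2 h3; lra.
    move: e1 e2 h3; have -> : minn k ks = ks by lia.
    move=> e1 e2 h3; rewrite /D in h1 heq; lra.
  - have hm : (a <= ks.+1 <= b)%N by lia.
    have e1 := bsum_split x _ _ _ hm; have e2 := bsum_split v' _ _ _ hm.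
    rewrite !(bsum_left _ _ _ _ hks2') in e1 e2.
    have h3 := hv'p ks.
    rewrite /D in heq; rewrite -/M in htot; lra.
exists ((S1 + S2) *m Avg a b t).
have h01 : 0 <= t <= 1 by rewrite ht0 ht1.
refine (@bstoch_mul a b _ _ v _ x _ (Avg_stoch a b t v h01)).
by apply: bstoch_add hS1 hS2; lia.
Qed.

End SCL.


Lemma exists_sorted (R : realType) (d : nat) (c : 'I_d -> R) :
  exists s : 'S_d, forall i j : 'I_d, (i <= j)%N -> c (s j) <= c (s i).
Proof.
case: d c => [|d'] c; first by exists 1%g => -[].
pose leT := fun a b : 'I_d'.+1 => c b <= c a.
pose l := sort leT (enum 'I_d'.+1).
have hperm : perm_eq l (enum 'I_d'.+1) by rewrite /l perm_sort.
have hsz : size l = d'.+1 by rewrite (perm_size hperm) size_enum_ord.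
have hu : uniq l by rewrite (perm_uniq hperm) enum_uniq.
pose f := fun i : 'I_d'.+1 => nth ord0 l i.
have finj : injective f.
  move=> i j /eqP; rewrite /f nth_uniq ?hsz // => /eqP; exact: val_inj.
exists (perm finj) => i j hij; rewrite !permE /f.
have hs : sorted leT l by apply: sort_sorted => a b; exact: le_total.
have htr : transitive leT by move=> a b e h1 h2; rewrite /leT; exact: le_trans h2 h1.
have := sorted_leq_nth htr (fun a => lexx (c a)) ord0 hs.
by move=> /(_ i j); rewrite !inE hsz; apply => //.
Qed.

Lemma ord1' (z : 'I_1) : z = ord0. Proof. exact: ord1. Qed.

Section Th.
Variables (R : realType) (d : nat) (g : 'cV[R]_d).
Hypothesis gpos : forall i, 0 < g i ord0.
Hypothesis gsum : \sum_i g i ord0 = 1.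

Lemma sum_perm (F : 'I_d -> R) (s : 'S_d) : \sum_i F (s i) = \sum_i F i.
Proof. by rewrite [RHS](reindex_inj (@perm_inj _ s)). Qed.

Lemma psum_mono (f : 'cV[R]_d) s m m' : (forall i, 0 <= f i ord0) -> (m <= m')%N ->
  xprev f s m <= xprev f s m'.
Proof.
move=> f0 hm; rewrite /xprev [X in _ <= X]big_mkcond [X in X <= _]big_mkcond /=.
apply: ler_sum => i _; case: ifP => h1; first by rewrite ifT //; lia.
by case: ifP => _ //; exact: f0.
Qed.

Lemma psum0 (f : 'cV[R]_d) s : xprev f s 0 = 0.
Proof. by rewrite /xprev big_pred0. Qed.

Lemma psum_top (f : 'cV[R]_d) s m : (d <= m)%N -> xprev f s m = \sum_i f i ord0.
Proof.
move=> hm; rewrite /xprev (eq_bigl xpredT); last by move=> i; have := ltn_ord i; rewrite /=; lia.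
exact: (sum_perm (fun i => f i ord0)).
Qed.

Lemma psumS (f : 'cV[R]_d) s (j : 'I_d) : xprev f s j.+1 = xprev f s j + f (s j) ord0.
Proof.
rewrite /xprev (bigD1 j) //= addrC; congr (_ + _); apply: eq_bigl => i.
by rewrite -val_eqE /=; lia.
Qed.

Lemma gge0 i : 0 <= g i ord0. Proof. exact: ltW. Qed.

Lemma xprev_ge0 s m : 0 <= xprev g s m.
Proof. by rewrite -(psum0 g s); apply: psum_mono => //; exact: gge0. Qed.

Lemma xprev_le1 s m : xprev g s m <= 1.
Proof.
rewrite -gsum -(@psum_top g s d (leqnn d)) ; case: (leqP m d) => hm.
  by apply: psum_mono => //; exact: gge0.
by rewrite !psum_top //; lia.
Qed.

Lemma d_gt0 : (0 < d)%N.
Proof. case: d g gsum => // g0; rewrite big_ord0 => /eqP; by rewrite eq_sym oner_eq0. Qed.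

Definition cl (t : R) (s : 'S_d) (j : 'I_d) : R :=
  if t <= xprev g s j then 0 else if xk g s j <= t then g (s j) ord0 else t - xprev g s j.

Lemma xkE s (j : 'I_d) : xk g s j = xprev g s j + g (s j) ord0.
Proof. exact: psumS. Qed.

Lemma cl_mono s j t1 t2 : t1 <= t2 -> cl t1 s j <= cl t2 s j.
Proof.
move=> ht; rewrite /cl; have := xkE s j; have := gge0 (s j).
set a := xprev g s j; set b := xk g s j => h1 h2.
by case: (leP t1 a) => ?; case: (leP b t1) => ?; case: (leP t2 a) => ?; case: (leP b t2) => ?; lra.
Qed.

Lemma cl_ge0 s j t : 0 <= cl t s j.
Proof.
rewrite /cl; have := xkE s j; have := gge0 (s j).
set a := xprev g s j; set b := xk g s j => h1 h2.
by case: (leP t a) => ?; case: (leP b t) => ?; lra.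
Qed.

Lemma cl0 s j : cl 0 s j = 0.
Proof. by rewrite /cl ifT // xprev_ge0. Qed.

Lemma cl1 s j : cl 1 s j = g (s j) ord0.
Proof.
rewrite /cl; have := xkE s j; have := gpos (s j); have := xprev_le1 s j.+1.
rewrite psumS => h1 h2 h3.
set a := xprev g s j in h1 h3 *; set b := xk g s j in h3 *.
by case: (leP 1 a) => ?; case: (leP b 1) => ?; lra.
Qed.

Lemma seg s t : 0 <= t <= 1 -> exists k : 'I_d, xprev g s k <= t <= xk g s k /\
  forall cc : 'I_d -> R, \sum_j cl t s j * cc j =
    \sum_(j < d | (j < k)%N) g (s j) ord0 * cc j + (t - xprev g s k) * cc k.
Proof.
move=> /andP[t0 t1].
have hd := d_gt0.
have hex : exists m, (m < d)%N && (t <= xk g s m).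
  exists d.-1; apply/andP; split; first lia.
  have -> : xk g s d.-1 = 1.
    by change (xprev g s d.-1.+1 = 1); rewrite psum_top ?gsum //; lia.
  done.
case: (ex_minnP hex) => m /andP[hm1 hm2] hmin.
pose k := Ordinal hm1.
have hk1 : xprev g s k <= t.
  rewrite /k /=; case: m hm1 hm2 hmin {k} => [|m'] hm1 hm2 hmin; first by rewrite psum0.
  have hm' : (m' < d)%N by lia.
  case: (leP t (xk g s m')) => h; last exact: ltW.
  by have := hmin m'; rewrite hm' h => /(_ isT); lia.
exists k; split; first by rewrite hk1.
move=> cc.
have hj : forall j : 'I_d, cl t s j = if (j < k)%N then g (s j) ord0
    else if j == k then t - xprev g s k else 0.
  move=> j; rewrite /cl.
  case: (ltngtP j k) => hjk.
  - have h1 : xk g s j <= xprev g s k.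
      by change (xprev g s j.+1 <= xprev g s k); apply: psum_mono => //; exact: gge0.
    have := xkE s j; have := gge0 (s j); move: h1.
    set a := xprev g s j; set b := xk g s j => h1 h2 h3.
    by case: (leP t a) => ?; case: (leP b t) => ?; lra.
  - have h1 : xk g s k <= xprev g s j.
      by change (xprev g s k.+1 <= xprev g s j); apply: psum_mono => //; exact: gge0.
    rewrite ifT; last by apply: le_trans h1; exact: hm2.
    have -> : (j == k) = false by apply/negP => /eqP e; move: hjk; rewrite e ltnn.
    done.
  - have -> : j = k by apply: val_inj.
    rewrite eqxx; have := xkE s k; have := gge0 (s k).
    have hm2' : t <= xk g s k by exact: hm2.
    have hk1' : xprev g s k <= t by exact: hk1.
    move: hm2' hk1'.
    set a := xprev g s k; set b := xk g s k => h0 h1 h2 h3.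
    by case: (leP t a) => ?; case: (leP b t) => ?; lra.
rewrite (bigD1 k) //= hj ltnn eqxx addrC; congr (_ + _).
rewrite big_mkcond [RHS]big_mkcond /=; apply: eq_bigr => j _.
rewrite hj; case: (ltngtP j k) => hjk /=.
- by rewrite ifT //; apply/negP => /eqP e; move: hjk; rewrite e ltnn.
- by case: (j == k); rewrite ?mul0r.
- by case: (j == k); rewrite ?mul0r.
Qed.

Lemma knap (p : 'cV[R]_d) s (w : 'I_d -> R) (k : 'I_d) : admissible g p s ->
  (forall j, 0 <= w j <= 1) ->
  \sum_j w j * p j ord0 <=
  yprev p s k + (\sum_j w j * g j ord0 - xprev g s k) * (p (s k) ord0 / g (s k) ord0).
Proof.
move=> hadm hw.
set rho := p (s k) ord0 / g (s k) ord0.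
suff : \sum_j (w (s j) * p (s j) ord0 - rho * (w (s j) * g (s j) ord0)) <=
       \sum_(j : 'I_d) (if (j < k)%N then p (s j) ord0 - rho * g (s j) ord0 else 0).
  move=> h.
  have e1 : \sum_j (w (s j) * p (s j) ord0 - rho * (w (s j) * g (s j) ord0)) =
      \sum_j w j * p j ord0 - rho * \sum_j w j * g j ord0.
    by rewrite sumrB -big_distrr /= (sum_perm (fun j => w j * p j ord0)) (sum_perm (fun j => w j * g j ord0)).
  have e2 : \sum_(j : 'I_d) (if (j < k)%N then p (s j) ord0 - rho * g (s j) ord0 else 0) =
      yprev p s k - rho * xprev g s k.
    by rewrite -big_mkcond sumrB -big_distrr.
  rewrite e1 e2 in h; rewrite mulrBl; lra.
apply: ler_sum => j _.
have hg := gpos (s j).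
have ep : p (s j) ord0 = g (s j) ord0 * (p (s j) ord0 / g (s j) ord0).
  by rewrite mulrC divfK //; exact: lt0r_neq0.
move: (hw (s j)) => /andP[w0 w1].
case: ifP => hjk.
- have hr : rho <= p (s j) ord0 / g (s j) ord0 by apply: hadm; lia.
  have hr' : 0 <= p (s j) ord0 / g (s j) ord0 - rho by rewrite subr_ge0.
  have w1' : 0 <= 1 - w (s j) by rewrite subr_ge0.
  have h := mulr_ge0 (mulr_ge0 (ltW hg) hr') w1'.
  rewrite [in X in X <= _]ep [in X in _ <= X]ep; nra.
- have hr : p (s j) ord0 / g (s j) ord0 <= rho by apply: hadm; lia.
  have hr' : 0 <= rho - p (s j) ord0 / g (s j) ord0 by rewrite subr_ge0.
  have h := mulr_ge0 (mulr_ge0 (ltW hg) hr') w0.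
  rewrite [in X in X <= _]ep; nra.
Qed.

Lemma TP_entry (T : 'M[R]_d) (v : 'cV[R]_d) i : (T *m v) i ord0 = \sum_j T i j * v j ord0.
Proof. by rewrite mxE. Qed.

Lemma orbit_bound (p : 'cV[R]_d) T s (k : nat) (k' : 'I_d) : is_TP g T -> admissible g p s ->
  forall s', yk (T *m p) s' k <=
  yprev p s k' + (xk g s' k - xprev g s k') * (p (s k') ord0 / g (s k') ord0).
Proof.
case=> hT0 hTc hTg hadm s'.
pose w j := \sum_(i < d | (i <= k)%N) T (s' i) j.
have hw : forall j, 0 <= w j <= 1.
  move=> j; apply/andP; split; first by apply: sumr_ge0 => i _; exact: hT0.
  rewrite -(hTc j) -(sum_perm (fun i => T i j) s') /w [X in X <= _]big_mkcond /=.
  apply: ler_sum => i _; case: ifP => // _; exact: hT0.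
have e1 : yk (T *m p) s' k = \sum_j w j * p j ord0.
  rewrite /yk /w; under eq_bigr do rewrite mxE.
  rewrite exchange_big /=; apply: eq_bigr => j _; by rewrite mulr_suml.
have hg' : forall i, g i ord0 = \sum_j T i j * g j ord0.
  by move=> i; rewrite -[LHS](congr1 (fun M : 'cV_d => M i ord0) hTg) mxE.
have e2 : xk g s' k = \sum_j w j * g j ord0.
  rewrite /xk /w; under eq_bigr do rewrite hg'.
  rewrite exchange_big /=; apply: eq_bigr => j _; by rewrite mulr_suml.
rewrite e1 e2; exact: knap.
Qed.

Definition Psi (p : 'cV[R]_d) s t := \sum_j cl t s j * (p (s j) ord0 / g (s j) ord0).

Definition T0 (sg pi : 'S_d) : 'M[R]_d := \matrix_(a, b)
  ((cl (xk g sg ((sg^-1)%g a)) pi ((pi^-1)%g b) - cl (xprev g sg ((sg^-1)%g a)) pi ((pi^-1)%g b)) / g b ord0).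

Lemma Lam s t : 0 <= t <= 1 -> \sum_j cl t s j = t.
Proof.
move=> ht; have [k [_ hk]] := seg s _ ht.
have := hk (fun _ => 1); under eq_bigr do rewrite mulr1.
move=> ->; under eq_bigr do rewrite mulr1; rewrite mulr1 -/(xprev g s k); lra.
Qed.

Lemma xprev_le_xk s (k : nat) : xprev g s k <= xk g s k.
Proof. by change (xprev g s k <= xprev g s k.+1); apply: psum_mono => //; exact: gge0. Qed.

Lemma xk01 s (k : nat) : 0 <= xk g s k <= 1.
Proof. by apply/andP; split; [exact: (xprev_ge0 s k.+1) | exact: (xprev_le1 s k.+1)]. Qed.

Lemma xprev01 s (k : nat) : 0 <= xprev g s k <= 1.
Proof. by apply/andP; split; [exact: (xprev_ge0 s k) | exact: (xprev_le1 s k)]. Qed.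

Lemma T0_TP sg pi : is_TP g (T0 sg pi).
Proof.
split.
- move=> a b; rewrite mxE; apply: divr_ge0; last exact: gge0.
  by rewrite subr_ge0; apply: cl_mono; exact: xprev_le_xk.
- move=> b; rewrite -(sum_perm _ sg).
  under eq_bigr do rewrite mxE permK.
  rewrite -mulr_suml.
  pose h m := cl (xprev g sg m) pi ((pi^-1)%g b).
  have -> : \sum_(i < d) (cl (xk g sg i) pi ((pi^-1)%g b) - cl (xprev g sg i) pi ((pi^-1)%g b))
      = \sum_(i < d) (h i.+1 - h i) by [].
  rewrite -(big_mkord xpredT (fun i => h i.+1 - h i)) telescope_sumr // /h.
  rewrite psum0 cl0 psum_top // gsum cl1 permKV subr0 divff //; exact: lt0r_neq0 (gpos b).
- apply/matrixP => a z; rewrite (ord1' z) !mxE.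
  rewrite -(sum_perm _ pi).
  under eq_bigr do rewrite /T0 mxE permK divfK ?(lt0r_neq0 (gpos _)) //.
  rewrite sumrB !Lam ?xk01 ?xprev01 // xkE permKV; lra.
Qed.

Lemma T0_p (p : 'cV[R]_d) sg pi (k : 'I_d) :
  (T0 sg pi *m p) (sg k) ord0 = Psi p pi (xk g sg k) - Psi p pi (xprev g sg k).
Proof.
rewrite mxE -(sum_perm _ pi) /Psi -sumrB; apply: eq_bigr => j _.
have hg := lt0r_neq0 (gpos (pi j)); by rewrite /T0 mxE !permK; field.
Qed.

Lemma TP_mul A B : is_TP g A -> is_TP g B -> is_TP g (A *m B).
Proof.
case=> hA0 hAc hAg [hB0 hBc hBg]; split.
- move=> i j; rewrite mxE; apply: sumr_ge0 => l _; exact: mulr_ge0.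
- move=> j; under eq_bigr do rewrite mxE.
  rewrite exchange_big /= -(hBc j); apply: eq_bigr => l _.
  by rewrite -mulr_suml hAc mul1r.
- by rewrite -mulmxA hBg hAg.
Qed.

Lemma TP_conv (a b : R) A B : 0 <= a -> 0 <= b -> a + b = 1 ->
  is_TP g A -> is_TP g B -> is_TP g (a *: A + b *: B).
Proof.
move=> ha hb hab [hA0 hAc hAg] [hB0 hBc hBg]; split.
- move=> i j; rewrite !mxE; apply: addr_ge0; exact: mulr_ge0.
- move=> j; under eq_bigr do rewrite !mxE.
  by rewrite big_split /= -!big_distrr /= hAc hBc !mulr1.
- by rewrite mulmxDl -!scalemxAl hAg hBg -scalerDl hab scale1r.
Qed.

Lemma finmin (P : pred 'I_d) (f : 'I_d -> R) : (forall k, P k -> 0 < f k) ->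
  exists m, 0 < m /\ forall k, P k -> m <= f k.
Proof.
move=> hf.
have hS : 0 <= \sum_(k | P k) (f k)^-1.
  by apply: sumr_ge0 => k hk; rewrite invr_ge0 ltW //; apply: hf.
exists (1 + \sum_(k | P k) (f k)^-1)^-1; split; first by rewrite invr_gt0; lra.
move=> k hk; have hfk := hf k hk.
have h1 : (f k)^-1 <= \sum_(k | P k) (f k)^-1.
  rewrite (bigD1 k) //= lerDl; apply: sumr_ge0 => j /andP[hj _].
  by rewrite invr_ge0 ltW // hf.
have h2 := ler_wpM2l (ltW hfk) h1; rewrite mulfV ?lt0r_neq0 // in h2.
rewrite -div1r ler_pdivrMr; last lra.
rewrite mulrDr mulr1; lra.
Qed.

Lemma tele (F : nat -> R) (k : nat) :
  \sum_(i < d | (i <= k)%N) (F i.+1 - F i) = F (minn k.+1 d) - F 0.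
Proof.
elim: k => [|k IH].
  case: d => [|d']; first by rewrite big_ord0 minn0 subrr.
  rewrite (bigD1 ord0) //= big1 ?addr0 //; last by move=> i /andP[h1 h2]; exfalso; move: h1 h2; rewrite -val_eqE /=; lia.
  by have -> : minn 1 d'.+1 = 1 by lia.
case: (ltnP k.+1 d) => hk.
  rewrite (bigD1 (Ordinal hk)) //= addrC.
  rewrite (eq_bigl (fun i : 'I_d => (i <= k)%N)); last first.
    by move=> i; rewrite -val_eqE /=; lia.
  rewrite IH; have -> : minn k.+1 d = k.+1 by lia.
  have -> : minn k.+2 d = k.+2 by lia.
  lra.
rewrite (eq_bigl (fun i : 'I_d => (i <= k)%N)); last by move=> i; have := ltn_ord i; lia.
by rewrite IH; congr (F _ - _); lia.
Qed.

Lemma sum_ind (a : 'I_d) : \sum_i (i == a)%:R = 1 :> R.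
Proof. by rewrite (bigD1 a) //= eqxx big1 ?addr0 // => i /negbTE ->. Qed.

Lemma orbit_sum (p : 'cV[R]_d) T : is_state p -> is_TP g T -> \sum_i (T *m p) i ord0 = 1.
Proof.
case=> _ hp [_ hTc _]; under eq_bigr do rewrite mxE.
rewrite exchange_big /= -hp; apply: eq_bigr => j _; by rewrite -mulr_suml hTc mul1r.
Qed.

Lemma dir_back (p r : 'cV[R]_d) : (1 < d)%N -> is_state p -> thermal_orbit g p r ->
  (exists pt, is_elbow g r pt /\ on_curve g p pt) -> rel_boundary (thermal_orbit g p) r.
Proof.
move=> hd hp [T [hT ->]] [pt [[sg [hsg [k [hk ept]]]] [pi [hpi [k' [h1 h2 h3]]]]]].
subst pt; rewrite /= in h1 h2 h3.
split; first exact: orbit_sum.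
split.
  move=> eps he; exists (T *m p); split => //; first exact: orbit_sum.
    by move=> i; rewrite subrr normr0.
  by exists T.
move=> eps he.
have hd0 : (0 < d)%N by lia.
have hd1 : (d.-1 < d)%N by lia.
pose a := sg (Ordinal hd0); pose b := sg (Ordinal hd1).
pose x : 'cV[R]_d := \col_i ((T *m p) i ord0 + eps / 2 * ((i == a)%:R - (i == b)%:R)).
exists x; split.
- rewrite /in_hyperplane; under eq_bigr do rewrite mxE.
  rewrite big_split /= -big_distrr /= sumrB !sum_ind subrr mulr0 addr0.
  exact: orbit_sum.
- move=> i; rewrite mxE addrC addKr normrM.
  have -> : `|eps / 2| = eps / 2 by rewrite ger0_norm //; lra.
  have : `|(i == a)%:R - (i == b)%:R| <= 1 :> R.
    by case: (i == a); case: (i == b); rewrite ?subrr ?subr0 ?sub0r ?normrN ?normr0 ?normr1.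
  move=> h; have : eps / 2 * `|(i == a)%:R - (i == b)%:R| <= eps / 2 * 1.
    by apply: ler_wpM2l => //; lra.
  lra.
- move=> [T' [hT' ex]].
  have hb := @orbit_bound p T' pi k k' hT' hpi sg.

  rewrite -ex in hb.
  have : yk x sg k = yk (T *m p) sg k + eps / 2.
    rewrite /yk; under eq_bigr do rewrite mxE.
    rewrite big_split /= -big_distrr /= sumrB.
    have -> : \sum_(i < d | (i <= k)%N) ((sg i == a)%:R : R) = 1.
      rewrite (bigD1 (Ordinal hd0)) //= eqxx big1 ?addr0 // => i /andP[_ hi].
      by rewrite /a (inj_eq (@perm_inj _ sg)) (negbTE hi).
    have -> : \sum_(i < d | (i <= k)%N) ((sg i == b)%:R : R) = 0.
      apply: big1 => i hi; rewrite /b (inj_eq (@perm_inj _ sg)).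
      have -> : (i == Ordinal hd1) = false by apply/negP; rewrite -val_eqE /=; lia.
      done.
    by rewrite subr0 mulr1.
  move=> e; rewrite e h3 in hb; lra.
Qed.

Lemma Psi0 (p : 'cV[R]_d) s : Psi p s 0 = 0.
Proof. by rewrite /Psi big1 // => j _; rewrite cl0 mul0r. Qed.

Lemma Psi1 (p : 'cV[R]_d) s : Psi p s 1 = \sum_i p i ord0.
Proof.
rewrite /Psi -(sum_perm (fun i => p i ord0) s); apply: eq_bigr => j _.
by rewrite cl1 mulrC divfK //; exact: lt0r_neq0 (gpos _).
Qed.

Lemma xk_top s (k : nat) : (d <= k.+1)%N -> xk g s k = 1.
Proof. by move=> hk; change (xprev g s k.+1 = 1); rewrite psum_top. Qed.

Lemma stretch (p r : 'cV[R]_d) : is_state p -> thermal_orbit g p r ->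
  ~ (exists pt, is_elbow g r pt /\ on_curve g p pt) ->
  exists mu, 0 < mu /\ thermal_orbit g p (\col_i ((1 + mu) * r i ord0 - mu * g i ord0)).
Proof.
move=> hp [T [hT er]] hno.
have [sg hsg] := @exists_sorted R d (fun i => r i ord0 / g i ord0).
have [pi hpi] := @exists_sorted R d (fun i => p i ord0 / g i ord0).
have hadm_r : admissible g r sg := hsg.
have hadm_p : admissible g p pi := hpi.
have rsum : \sum_i r i ord0 = 1 by rewrite er; exact: orbit_sum.
have r0 : forall i, 0 <= r i ord0.
  move=> i; rewrite er mxE; apply: sumr_ge0 => j _; apply: mulr_ge0.
    by case: hT => h _ _; exact: h.
  by case: hp => h _; exact: h.
have hgap : forall k : 'I_d, (k.+1 < d)%N -> 0 < Psi p pi (xk g sg k) - yk r sg k.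
  move=> k hk.
  have [k' [/andP[h1 h2] hseg]] := seg pi _ (xk01 sg k).
  have ePsi : Psi p pi (xk g sg k) = yprev p pi k' +
      (xk g sg k - xprev g pi k') * (p (pi k') ord0 / g (pi k') ord0).
    rewrite /Psi hseg; congr (_ + _); apply: eq_bigr => j _.
    by rewrite mulrC divfK //; exact: lt0r_neq0 (gpos _).
  have hle : yk r sg k <= Psi p pi (xk g sg k).
    by rewrite ePsi er; exact: orbit_bound.
  rewrite subr_gt0 lt_neqAle hle andbT; apply/eqP => heq; apply: hno.
  exists (xk g sg k, yk r sg k); split.
    by exists sg; split => //; exists k; split.
  exists pi; split => //; exists k'; split => //=; by rewrite heq.
have [mu [mu0 hmu]] := @finmin (fun k : 'I_d => (k.+1 < d)%N) (fun k => Psi p pi (xk g sg k) - yk r sg k) hgap.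
exists mu; split => //.
pose rm : 'cV[R]_d := \col_i ((1 + mu) * r i ord0 - mu * g i ord0).
pose v : 'cV[R]_d := T0 sg pi *m p.
pose pos := fun i : 'I_d => nat_of_ord ((sg^-1)%g i).
have hps : forall (f : 'I_d -> R) k, psum R d pos f 0 d k = \sum_(i < d | (i <= k)%N) f (sg i).
  move=> f k; rewrite /psum (reindex_inj (@perm_inj _ sg)) /=; apply: eq_bigl => i.
  by rewrite /inB /pos permK /= ltn_ord.
have hpx : forall k, psum R d pos (fun i => rm i ord0) 0 d k = (1 + mu) * yk r sg k - mu * xk g sg k.
  move=> k; rewrite hps /yk /xk; under eq_bigr do rewrite mxE.
  by rewrite sumrB -!big_distrr.
have hpv : forall k, psum R d pos (fun i => v i ord0) 0 d k = Psi p pi (xk g sg k).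
  move=> k; rewrite hps; under eq_bigr do rewrite T0_p.
  rewrite (tele (fun m => Psi p pi (xprev g sg m))) psum0 Psi0 subr0.
  case: (leqP k.+1 d) => hk; first by [].
  rewrite xk_top ?psum_top ?gsum //; lia.
have htop : forall k, (d <= k.+1)%N ->
    psum R d pos (fun i => rm i ord0) 0 d k = 1 /\ psum R d pos (fun i => v i ord0) 0 d k = 1.
  move=> k hk; rewrite hpx hpv xk_top // Psi1 (proj2 hp).
  have -> : yk r sg k = 1 by change (xprev r sg k.+1 = 1); rewrite psum_top.
  split => //; lra.
have [S hS] : exists S, bstoch R d (fun i => g i ord0) pos 0 d S (fun i => v i ord0) (fun i => rm i ord0).
  apply: (@SCL_main R d (fun i => g i ord0) pos (fun i => rm i ord0) gpos d 0 d); first lia.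
  - move=> i j _ _ hij.
    have := hsg _ _ hij; rewrite !permKV !mxE => h.
    have e : forall l, ((1 + mu) * r l ord0 - mu * g l ord0) / g l ord0 =
        (1 + mu) * (r l ord0 / g l ord0) - mu.
      by move=> l; have := lt0r_neq0 (gpos l) => hl; field.
    rewrite !e; have : 0 <= 1 + mu by lra.
    move=> h1; have := ler_wpM2l h1 h; lra.
  - move=> k; case: (leqP d k.+1) => hk.
      by have [-> ->] := htop k hk.
    rewrite hpx hpv.
    have hkd : (k < d)%N by lia.
    have h1 := hmu (Ordinal hkd) hk; have h2 := hgap (Ordinal hkd) hk.
    rewrite /= in h1 h2.
    have hy : yk r sg k <= 1.
      rewrite -rsum -(sum_perm (fun i => r i ord0) sg) /yk [X in X <= _]big_mkcond /=.
      by apply: ler_sum => i _; case: ifP.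
    have hx : 0 <= xk g sg k by case/andP: (xk01 sg k).
    have : mu * (yk r sg k - xk g sg k) <= mu * 1 by apply: ler_wpM2l; lra.
    lra.
  - rewrite -!(psum_hi R d pos _ 0 d d (leqnSn d)).
    by have [-> ->] := htop d (leqnSn d).
have hST : is_TP g S.
  case: hS => h0 _ hc hw _; split => //.
  - by move=> j; apply: hc; rewrite /inB /pos ltn_ord.
  - apply/matrixP => i z; rewrite (ord1' z) mxE; apply: hw; by rewrite /inB /pos ltn_ord.
exists (S *m T0 sg pi); split; first by apply: TP_mul => //; exact: T0_TP.
rewrite -mulmxA -/v; apply/matrixP => i z; rewrite (ord1' z) [RHS]mxE.
case: hS => _ _ _ _ hv; rewrite -(hv i); last by rewrite /inB /pos ltn_ord.
by [].
Qed.

Lemma sum_ind_mul (a : 'I_d) (F : 'I_d -> R) : \sum_i (i == a)%:R * F i = F a.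
Proof. by rewrite (bigD1 a) //= eqxx mul1r big1 ?addr0 // => i /negbTE ->; rewrite mul0r. Qed.

Lemma g_le1 i : g i ord0 <= 1.
Proof.
rewrite -gsum (bigD1 i) //= lerDl; apply: sumr_ge0 => j _; exact: gge0.
Qed.

Lemma interior (p r : 'cV[R]_d) : is_state p -> p != g -> thermal_orbit g p r ->
  ~ (exists pt, is_elbow g r pt /\ on_curve g p pt) ->
  exists eps, 0 < eps /\ forall x, in_hyperplane x ->
    (forall i, `|x i ord0 - r i ord0| < eps) -> thermal_orbit g p x.
Proof.
move=> hp hpg horb hno.
have rsum : \sum_i r i ord0 = 1 by case: horb => T [hT ->]; exact: orbit_sum.
have [mu [mu0 [Tm [hTm erm]]]] := @stretch p r hp horb hno.
have : ~~ [forall j, p j ord0 == g j ord0].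
  apply: contra hpg => /forallP h; apply/eqP/matrixP => i z; rewrite (ord1' z); exact/eqP.
case/forallPn => j0 hj0.
set c := (p j0 ord0 - g j0 ord0)^-1.
have cne : c != 0 by rewrite invr_neq0 // subr_eq0.
pose u j := c * ((j == j0)%:R - g j0 ord0).
have hug : \sum_j u j * g j ord0 = 0.
  rewrite /u; under eq_bigr do rewrite -mulrA mulrBl.
  by rewrite -big_distrr /= sumrB sum_ind_mul -big_distrr /= gsum mulr1 subrr mulr0.
have hup : \sum_j u j * p j ord0 = 1.
  rewrite /u; under eq_bigr do rewrite -mulrA mulrBl.
  rewrite -big_distrr /= sumrB sum_ind_mul -big_distrr /= (proj2 hp) mulr1.
  by rewrite /c mulVf // subr_eq0.
have hub : forall j, `|u j| <= `|c|.
  move=> j; rewrite /u normrM -[X in _ <= X]mulr1; apply: ler_wpM2l => //.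
  have := gpos j0; have := g_le1 j0.
  by case: (j == j0) => h1 h2; rewrite ler_norml /=; lra.
have [gm [gm0 hgm]] := @finmin xpredT (fun i => g i ord0) (fun i _ => gpos i).
have c1 : 0 < `|c| + 1 by have := normr_ge0 c; lra.
have mu1 : 0 < 1 + mu by lra.
set eps := mu / (1 + mu) * gm / (`|c| + 1).
have eps0 : 0 < eps.
  by rewrite /eps; apply: divr_gt0 => //; apply: mulr_gt0 => //; exact: divr_gt0.
exists eps; split => // x hx hnear.
set K := (1 + mu) / mu.
have K0 : 0 < K by exact: divr_gt0.
pose Tz : 'M[R]_d := \matrix_(i, j) (g i ord0 + K * (x i ord0 - r i ord0) * u j).
have hsumK : forall a (h : 'I_d -> _), \sum_j a * u j * h j = a * \sum_j u j * h j.
  by move=> a h; rewrite mulr_sumr; apply: eq_bigr => j _; rewrite mulrA.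
have hTz : is_TP g Tz.
  split.
  - move=> i j; rewrite mxE.
    have hA := hnear i; have hB := hub j.
    set A := `|x i ord0 - r i ord0| in hA; set B := `|u j| in hB.
    have hA0 : 0 <= A by exact: normr_ge0.
    have hB0 : 0 <= B by exact: normr_ge0.
    have h1 : A * B <= eps * `|c| by apply: ler_pM => //; exact: ltW.
    have h2 : K * (A * B) <= K * (eps * `|c|) by apply: ler_wpM2l => //; exact: ltW.
    have h3 : K * (eps * `|c|) = gm * (`|c| / (`|c| + 1)).
      rewrite /K /eps; field; apply/and3P; split; apply: lt0r_neq0 => //.
    have h4 : `|c| / (`|c| + 1) <= 1 by rewrite ler_pdivrMr // mul1r; lra.
    have h5 : gm * (`|c| / (`|c| + 1)) <= gm by rewrite -[X in _ <= X]mulr1; apply: ler_wpM2l => //; exact: ltW.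
    have h6 := hgm i isT.
    have : `|K * (x i ord0 - r i ord0) * u j| <= g i ord0.
      have eK : `|(1 + mu) / mu| = K by rewrite gtr0_norm.
      rewrite normrM [`|_ * (x i ord0 - _)|]normrM (gtr0_norm (_ : 0 < (1 + mu) / mu)) // -/A -/B -/K -mulrA; lra.
    rewrite ler_norml => /andP[h7 _]; lra.
  - move=> j; under eq_bigr do rewrite mxE.
    rewrite big_split /= gsum -mulr_suml -big_distrr /= sumrB rsum.
    by move: hx; rewrite /in_hyperplane => ->; rewrite subrr mulr0 mul0r addr0.
  - apply/matrixP => i z; rewrite (ord1' z) !mxE.
    under eq_bigr do rewrite !mxE mulrDl.
    rewrite big_split /= -mulr_sumr gsum mulr1.
    by rewrite hsumK hug mulr0 addr0.
have hpz : forall i, (Tz *m p) i ord0 = g i ord0 + K * (x i ord0 - r i ord0).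
  move=> i; rewrite mxE; under eq_bigr do rewrite mxE mulrDl.
  rewrite big_split /= -mulr_sumr (proj2 hp) mulr1.
  by rewrite hsumK hup mulr1.
exists ((1 + mu)^-1 *: Tm + (mu / (1 + mu)) *: Tz); split.
  apply: TP_conv => //.
  - by rewrite invr_ge0; exact: ltW.
  - by apply: divr_ge0; exact: ltW.
  - by field; exact: lt0r_neq0.
apply/matrixP => i z; rewrite (ord1' z).
rewrite mulmxDl -!scalemxAl [RHS]mxE [_ (_ *: _) _ _]mxE [_ (_ *: (Tz *m p)) _ _]mxE.
rewrite hpz -erm mxE /K.
field; apply/andP; split; exact: lt0r_neq0.
Qed.

End Th.


Theorem mainTheorem4 (R : realType) (d : nat) (i0 : 'I_d) (beta : R)
    (E : 'I_d -> R) (p r : 'cV[R]_d) :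
  (2 <= d)%N -> 0 < beta ->
  nat_of_ord i0 = 0%N -> E i0 = 0 -> injective E ->
  is_state p ->
  thermal_orbit (gibbs beta E i0) p r ->
  (rel_boundary (thermal_orbit (gibbs beta E i0) p) r <->
   exists pt : R * R, is_elbow (gibbs beta E i0) r pt /\
                      on_curve (gibbs beta E i0) p pt).
Proof.
move=> hd hb hi0 hE hinj hp horb.
set g := gibbs beta E i0.
have Z0 : 0 < \sum_(j < d) qfac beta E j i0.
  rewrite (bigD1 i0) //=; apply: ltr_pwDl; first exact: expR_gt0.
  by apply: sumr_ge0 => j _; exact: ltW (expR_gt0 _).
have gpos : forall i, 0 < g i ord0.
  by move=> i; rewrite /g /gibbs mxE; apply: divr_gt0 => //; exact: expR_gt0.
have gsum : \sum_i g i ord0 = 1.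
  rewrite /g /gibbs; under eq_bigr do rewrite mxE.
  by rewrite -mulr_suml divff //; exact: lt0r_neq0.
split; last exact: dir_back gpos p r hd hp horb.
move=> hbd.
case: (eqVneq p g) => [epg | hpg].
- have hd0 : (0 < d)%N by lia.
  have er : r = g.
    case: horb => T [[_ _ hTg] ->]; by rewrite epg.
  exists (xk g 1%g 0%N, yk r 1%g 0%N); split.
  + exists 1%g; split.
      by move=> i j _; rewrite er !perm1 !divff ?lexx // lt0r_neq0.
    by exists (Ordinal hd0); split => /=; [lia | by []].
  + exists 1%g; split.
      by move=> i j _; rewrite epg !perm1 !divff ?lexx // lt0r_neq0.
    exists (Ordinal hd0); split => /=.
    * rewrite psum0; case/andP: (@xk01 R d g gpos gsum 1%g 0%N) => //.
    * by rewrite lexx.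
    * rewrite !psum0 (_ : yprev p 1%g 0 = 0); last by rewrite /yprev big_pred0.
      rewrite subr0 add0r epg er perm1 divff ?mulr1 //; exact: lt0r_neq0.
- case: (classic (exists pt, is_elbow g r pt /\ on_curve g p pt)) => // hno.
  exfalso.
  have [eps [eps0 hin]] := @interior R d g gpos gsum p r hp hpg horb hno.
  case: hbd => _ [_ hout].
  have [x [hx hn hnot]] := hout eps eps0.
  by apply: hnot; exact: hin.
Qed.
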